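(* Let $I\neq\emptyset$ be any index set. Suppose that $Q$ is a non-empty subset of $l_\infty(I)$ given by an arbitrary system of inequalities, each of the form $\sigma x_i\le C$ or $\sigma x_i+\tau x_j\le C$ with $i,j\in I$, $|\sigma|=|\tau|=1$ and $C\in\mathbb{R}$. Then $Q$, with the metric induced by the sup norm, is injective.
   Context: $l_\infty(I)$ is the Banach space of bounded real families $(x_i)_{i\in I}$ with the sup norm. A metric space $Y$ is injective if for every metric space $B$, every $A\subset B$ and every 1-Lipschitz $f\colon A\to Y$ there is a 1-Lipschitz extension $B\to Y$. *)

(* Defs.v *)
From Stdlib Require Import Reals.
From Coquelicot Require Import Coquelicot.
Open Scope R_scope.

Definition is_metric (X : Type) (d : X -> X -> R) : Prop :=
  (forall x y, 0 <= d x y) /\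
  (forall x y, d x y = 0 <-> x = y) /\
  (forall x y, d x y = d y x) /\
  (forall x y z, d x z <= d x y + d y z).

Definition injective_metric (Y : Type) (dY : Y -> Y -> R) : Prop :=
  forall (B : Type) (dB : B -> B -> R), is_metric B dB ->
  forall (A : B -> Prop) (f : {b : B | A b} -> Y),
    (forall a a' : {b : B | A b}, dY (f a) (f a') <= dB (proj1_sig a) (proj1_sig a')) ->
    exists g : B -> Y,
      (forall b b', dY (g b) (g b') <= dB b b') /\
      (forall a : {b : B | A b}, g (proj1_sig a) = f a).

Definition linf (I : Type) (x : I -> R) : Prop :=
  exists M, forall i, Rabs (x i) <= M.

Definition supdist {I : Type} (x y : I -> R) : R :=
  real (Lub_Rbar (fun r => exists i, r = Rabs (x i - y i))).

Inductive ineq (I : Type) : Type :=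
  | Ineq1 (sigma : R) (i : I) (C : R)
  | Ineq2 (sigma tau : R) (i j : I) (C : R).
Arguments Ineq1 {I}.
Arguments Ineq2 {I}.

Definition ineq_wf {I : Type} (c : ineq I) : Prop :=
  match c with
  | Ineq1 sigma _ _ => Rabs sigma = 1
  | Ineq2 sigma tau _ _ _ => Rabs sigma = 1 /\ Rabs tau = 1
  end.

Definition ineq_sat {I : Type} (c : ineq I) (x : I -> R) : Prop :=
  match c with
  | Ineq1 sigma i C => sigma * x i <= C
  | Ineq2 sigma tau i j C => sigma * x i + tau * x j <= C
  end.

Definition Qset {I : Type} (S : ineq I -> Prop) (x : I -> R) : Prop :=
  linf I x /\ forall c, S c -> ineq_sat c x.

Definition Qspace {I : Type} (S : ineq I -> Prop) : Type := {x : I -> R | Qset S x}.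

Definition Qdist {I : Type} (S : ineq I -> Prop) (a b : Qspace S) : R :=
  supdist (proj1_sig a) (proj1_sig b).

(* Main.v *)
Require Import Defs.
From Stdlib Require Import Reals Lra Classical ProofIrrelevance FunctionalExtensionality.
From Coquelicot Require Import Coquelicot.
Open Scope R_scope.

Lemma sup_ge (E : R -> Prop) M x : E x -> (forall y, E y -> y <= M) ->
  x <= real (Lub_Rbar E).
Proof.
  intros Ex HM. destruct (Lub_Rbar_correct E) as [Hub Hl].
  assert (H1 := Hub x Ex). assert (H2 := Hl (Finite M) HM).
  destruct (Lub_Rbar E); simpl in *; try contradiction; lra.
Qed.

Lemma sup_le (E : R -> Prop) M x : E x -> (forall y, E y -> y <= M) ->
  real (Lub_Rbar E) <= M.
Proof.
  intros Ex HM. destruct (Lub_Rbar_correct E) as [Hub Hl].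
  assert (H1 := Hub x Ex). assert (H2 := Hl (Finite M) HM).
  destruct (Lub_Rbar E); simpl in *; try contradiction; lra.
Qed.

Lemma abs_diff_le a b : Rabs (a - b) <= Rabs a + Rabs b.
Proof.
  unfold Rminus. rewrite <- (Rabs_Ropp b). apply Rabs_triang.
Qed.

Lemma supdist_ge {I : Type} (x y : I -> R) i : linf I x -> linf I y ->
  Rabs (x i - y i) <= supdist x y.
Proof.
  intros [Mx Hx] [My Hy]. unfold supdist.
  apply (sup_ge _ (Mx + My)).
  - exists i; reflexivity.
  - intros z [j ->]. pose proof (abs_diff_le (x j) (y j)).
    pose proof (Hx j); pose proof (Hy j); lra.
Qed.

Lemma supdist_le {I : Type} (HI : inhabited I) (x y : I -> R) D :
  (forall i, Rabs (x i - y i) <= D) -> supdist x y <= D.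
Proof.
  intros H. destruct HI as [i0]. unfold supdist.
  apply (sup_le _ D (Rabs (x i0 - y i0))).
  - exists i0; reflexivity.
  - intros z [j ->]. apply H.
Qed.

Lemma sgn_le s u : s = 1 \/ s = -1 -> s * u <= Rabs u.
Proof.
  intros [-> | ->].
  - rewrite Rmult_1_l. apply Rle_abs.
  - rewrite <- Rabs_Ropp. replace (-1 * u) with (- u) by ring. apply Rle_abs.
Qed.

Lemma abs1 s : Rabs s = 1 -> s = 1 \/ s = -1.
Proof.
  unfold Rabs. destruct (Rcase_abs s); intros; lra.
Qed.

Definition Vf {I B : Type} (P : B -> Prop) (dB : B -> B -> R)
  (F : {b : B | P b} -> I -> R) (s : R) (i : I) (b : B) : R :=
  real (Lub_Rbar (fun z => exists a, z = s * F a i - dB b (proj1_sig a))).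

Lemma V_ub {I B : Type} (P : B -> Prop) dB F (a0 : {b : B | P b})
  (Hm : is_metric B dB)
  (HF : forall a a' (i : I), Rabs (F a i - F a' i) <= dB (proj1_sig a) (proj1_sig a'))
  s i b : s = 1 \/ s = -1 -> forall a, s * F a i - dB b (proj1_sig a) <= Vf P dB F s i b.
Proof.
  intros Hs a. unfold Vf. apply (sup_ge _ (s * F a0 i + dB b (proj1_sig a0))).
  - exists a; reflexivity.
  - intros z [a' ->].
    destruct Hm as [_ [_ [Hsym Htr]]].
    pose proof (sgn_le s (F a' i - F a0 i) Hs).
    pose proof (HF a' a0 i).
    pose proof (Htr (proj1_sig a') b (proj1_sig a0)).
    pose proof (Hsym b (proj1_sig a')).
    assert (s * (F a' i - F a0 i) = s * F a' i - s * F a0 i) by ring. lra.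
Qed.

Lemma V_le {I B : Type} (P : B -> Prop) dB F (a0 : {b : B | P b}) s (i : I) b M :
  (forall a, s * F a i - dB b (proj1_sig a) <= M) -> Vf P dB F s i b <= M.
Proof.
  intros H. unfold Vf. apply (sup_le _ M (s * F a0 i - dB b (proj1_sig a0))).
  - exists a0; reflexivity.
  - intros z [a ->]. apply H.
Qed.

Theorem proposition2p4 (I : Type) (HI : inhabited I) (S : ineq I -> Prop)
  (HS : forall c, S c -> ineq_wf c)
  (Hne : exists x : I -> R, Qset S x) :
  injective_metric (Qspace S) (Qdist S).
Proof.
  intros B dB Hm A f Hf.
  destruct (classic (exists a : {b : B | A b}, True)) as [[a0 _] | Hno].
  2:{ destruct Hne as [x0 Hx0].
      exists (fun _ => exist _ x0 Hx0). split.
      - intros b b'. unfold Qdist; simpl. apply supdist_le; auto.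
        intros i. replace (x0 i - x0 i) with 0 by ring. rewrite Rabs_R0.
        destruct Hm as [H0 _]. apply H0.
      - intros a. exfalso. apply Hno. exists a. exact Logic.I. }
  set (F := fun a => proj1_sig (f a)).
  assert (HF : forall a a' i, Rabs (F a i - F a' i) <= dB (proj1_sig a) (proj1_sig a')).
  { intros a a' i. eapply Rle_trans; [| apply Hf].
    unfold Qdist, F. apply supdist_ge.
    - exact (proj1 (proj2_sig (f a))).
    - exact (proj1 (proj2_sig (f a'))). }
  assert (HFQ : forall a c, S c -> ineq_sat c (F a)).
  { intros a c Sc. exact (proj2 (proj2_sig (f a)) c Sc). }
  pose proof Hm as [Hpos [Hzero [Hsym Htr]]].
  set (V := Vf A dB F).
  assert (Vub : forall s i b, s = 1 \/ s = -1 -> forall a,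
            s * F a i - dB b (proj1_sig a) <= V s i b).
  { intros. apply (V_ub A dB F a0 Hm HF); auto. }
  assert (Vle : forall s i b M, (forall a, s * F a i - dB b (proj1_sig a) <= M) ->
            V s i b <= M).
  { intros. apply (V_le A dB F a0); auto. }
  assert (Hopp : forall s, s = 1 \/ s = -1 -> -s = 1 \/ -s = -1).
  { intros s [-> | ->]; [right | left]; ring. }
  assert (Vkey : forall s t i j b C, s = 1 \/ s = -1 -> t = 1 \/ t = -1 ->
            (forall a, s * F a i + t * F a j <= C) -> V s i b <= V (-t) j b + C).
  { intros s t i j b C Hs Ht H. apply Vle. intros a.
    pose proof (Vub (-t) j b (Hopp t Ht) a). pose proof (H a).
    assert (-t * F a j = - (t * F a j)) by ring. lra. }
  set (xb := fun b i => (V 1 i b - V (-1) i b) / 2).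
  assert (Hsx : forall s b i, s = 1 \/ s = -1 -> s * xb b i = (V s i b - V (-s) i b) / 2).
  { intros s b i [-> | ->]; unfold xb.
    - assert (E1 : Ropp 1 = -1) by ring. rewrite E1. field.
    - assert (E2 : Ropp (-1) = 1) by ring. rewrite E2. field. }
  assert (HQ : forall b, Qset S (xb b)).
  { intros b. split.
    - destruct (proj1 (proj2_sig (f a0))) as [M0 HM0].
      exists (M0 + dB b (proj1_sig a0)). intros i.
      pose proof (HM0 i) as Hi. fold (F a0) in Hi.
      pose proof (Vub 1 i b (or_introl eq_refl) a0).
      pose proof (Vub (-1) i b (or_intror eq_refl) a0).
      assert (V 1 i b <= F a0 i + dB b (proj1_sig a0)).
      { apply Vle. intros a. pose proof (HF a a0 i).
        pose proof (Rle_abs (F a i - F a0 i)).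
        pose proof (Htr (proj1_sig a) b (proj1_sig a0)).
        pose proof (Hsym b (proj1_sig a)). lra. }
      assert (V (-1) i b <= - F a0 i + dB b (proj1_sig a0)).
      { apply Vle. intros a. pose proof (HF a a0 i).
        pose proof (Rle_abs (-(F a i - F a0 i))). rewrite Rabs_Ropp in *.
        pose proof (Htr (proj1_sig a) b (proj1_sig a0)).
        pose proof (Hsym b (proj1_sig a)). lra. }
      apply Rabs_le. unfold Rabs in Hi. destruct (Rcase_abs (F a0 i)); unfold xb; lra.
    - intros c Sc. pose proof (HS c Sc) as Hw. destruct c as [s i C | s t i j C]; simpl in *.
      + apply abs1 in Hw.
        assert (H := Vkey s s i i b (C + C) Hw Hw).
        assert (H' : forall a, s * F a i + s * F a i <= C + C).
        { intros a. pose proof (HFQ a _ Sc). simpl in *. lra. }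
        specialize (H H'). rewrite Hsx by auto. lra.
      + destruct Hw as [Hs Ht]. apply abs1 in Hs. apply abs1 in Ht.
        assert (H1 := Vkey s t i j b C Hs Ht).
        assert (H2 := Vkey t s j i b C Ht Hs).
        assert (H' : forall a, s * F a i + t * F a j <= C).
        { intros a. pose proof (HFQ a _ Sc). simpl in *. lra. }
        assert (H'' : forall a, t * F a j + s * F a i <= C).
        { intros a. pose proof (HFQ a _ Sc). simpl in *. lra. }
        specialize (H1 H'). specialize (H2 H'').
        rewrite (Hsx s) by auto. rewrite (Hsx t) by auto. lra. }
  assert (Vlip : forall s i b b', s = 1 \/ s = -1 -> V s i b <= V s i b' + dB b b').
  { intros s i b b' Hs. apply Vle. intros a.
    pose proof (Vub s i b' Hs a). pose proof (Htr b' b (proj1_sig a)).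
    pose proof (Hsym b' b). lra. }
  exists (fun b => exist _ (xb b) (HQ b)). split.
  - intros b b'. unfold Qdist; simpl. apply supdist_le; auto. intros i.
    pose proof (Vlip 1 i b b' (or_introl eq_refl)).
    pose proof (Vlip 1 i b' b (or_introl eq_refl)).
    pose proof (Vlip (-1) i b b' (or_intror eq_refl)).
    pose proof (Vlip (-1) i b' b (or_intror eq_refl)).
    pose proof (Hsym b b').
    apply Rabs_le. unfold xb. lra.
  - intros a. apply eq_sig_hprop.
    { intros; apply proof_irrelevance. }
    simpl. change (proj1_sig (f a)) with (F a).
    assert (HV : forall s i, s = 1 \/ s = -1 -> V s i (proj1_sig a) = s * F a i).
    { intros s i Hs. apply Rle_antisym.
      - apply Vle. intros a'. pose proof (sgn_le s (F a' i - F a i) Hs).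
        pose proof (HF a' a i). pose proof (Hsym (proj1_sig a) (proj1_sig a')).
        assert (s * (F a' i - F a i) = s * F a' i - s * F a i) by ring. lra.
      - pose proof (Vub s i (proj1_sig a) Hs a).
        rewrite (proj2 (Hzero (proj1_sig a) (proj1_sig a)) eq_refl) in H. lra. }
    apply functional_extensionality. intros i. unfold xb.
    rewrite (HV 1 i (or_introl eq_refl)), (HV (-1) i (or_intror eq_refl)). field.
Qed.
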